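(* Let $A$ be an infinite set, $(x_n^* )_{ n \in \mathbb{N} }$ a sequence in $[-1,1]^A$ and $(f_n)_{ n \in \mathbb{N} }$ a sequence in $FBL(A)$ such that: (1) $f_n \geq 0$ for every $n$; (2) $f_n(x_n^* )=1$ for every $n$; (3) for every finite set $F\subseteq A$ there is $n\in\mathbb{N}$ with $x_n^*|_F=0$. Then for every $\varepsilon>0$ there is a subsequence $(f_{n_k})_{ k \in \mathbb{N} }$ such that $\big\| \sum_{k=1}^{m} f_{n_k} \big\| \geq m - \varepsilon$ for every $m\in \mathbb{N}$.
   Context: For a nonempty set $A$ and $x\in A$, $\delta_x:[-1,1]^A\to[-1,1]$ is $\delta_x(x^* )=x^*(x)$. For $f:[-1,1]^A\to\mathbb{R}$, $$\|f\| = \sup \Big\{\sum_{i = 1}^n | f(x_{i}^{\ast})| : n \in \mathbb{N},\ x_1^{\ast}, \ldots, x_n^{\ast} \in [-1,1]^A,\ \sup_{x \in A} \sum_{i=1}^n |x_i^{\ast}(x)| \leq 1 \Big\}.$$ $FBL(A)$ is the Banach lattice generated by the functions $\delta_x$ ($x\in A$) inside the Banach lattice of all functions $[-1,1]^A\to\mathbb{R}$ with finite norm (pointwise operations and order), equipped with this norm. $[-1,1]^A$ carries the product topology. *)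

(* Defs.v *)
From HB Require Import structures.
From mathcomp Require Import all_boot all_order all_algebra.
From mathcomp Require Import all_classical all_reals.
From mathcomp Require Import ereal.


Set Implicit Arguments. Unset Strict Implicit. Unset Printing Implicit Defensive.
Import Order.TTheory GRing.Theory Num.Theory.
Local Open Scope ring_scope.
Local Open Scope classical_set_scope.

Section FBL.
Variables (R : realType) (A : Type).

Definition in_cube (xs : A -> R) : Prop := forall a, (-1 <= xs a <= 1)%R.

Definition fdelta (x : A) : (A -> R) -> R := fun xs => xs x.

Definition fbl_norm (f : (A -> R) -> R) : \bar R :=
  ereal_sup [set r : \bar R | exists (n : nat) (xs : 'I_n -> (A -> R)),
     [/\ (forall i, in_cube (xs i)),
         (forall x : A, \sum_(i < n) `|xs i x| <= 1)%R &
         r = (\sum_(i < n) `|f (xs i)|)%:E]].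

Inductive fvl : ((A -> R) -> R) -> Prop :=
  | fvl_fdelta x : fvl (fdelta x)
  | fvl_add f g : fvl f -> fvl g -> fvl (fun xs => (f xs + g xs)%R)
  | fvl_scale (c : R) f : fvl f -> fvl (fun xs => (c * f xs)%R)
  | fvl_max f g : fvl f -> fvl g -> fvl (fun xs => Num.max (f xs) (g xs)).

(* Functions are only relevant on [-1,1]^A
   (the norm, order and evaluations used only look at the cube). *)
Definition FBL (f : (A -> R) -> R) : Prop :=
  (fbl_norm f < +oo)%E /\
  forall e : R, (0 < e)%R -> exists g, fvl g /\ (fbl_norm (fun xs => (f xs - g xs)%R) < e%:E)%E.

End FBL.

(* Main.v *)
Require Import Defs.
From HB Require Import structures.
From mathcomp Require Import all_boot all_order all_algebra.
From mathcomp Require Import all_classical all_reals.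
From mathcomp Require Import ereal.
From mathcomp Require Import ring lra.

Import Order.TTheory GRing.Theory Num.Theory.
Local Open Scope ring_scope.
Local Open Scope classical_set_scope.

Section Aux.
Variables (R : realType) (A : Type).

Definition restr (F : set A) (x : A -> R) : A -> R :=
  fun a => if `[< F a >] then x a else 0.

Lemma restr_cube F x : in_cube x -> in_cube (restr F x).
Proof.
move=> hx a; rewrite /restr; case: ifP => _; first exact: hx.
by rewrite lerN10 ler01.
Qed.

Lemma eval_le_norm (h : (A -> R) -> R) x :
  in_cube x -> (`|h x|%:E <= fbl_norm h)%E.
Proof.
move=> hx; apply: ereal_sup_ubound.
exists 1%N, (fun _ => x); split => //.
  by move=> a; rewrite big_ord1 ler_norml.
by rewrite big_ord1.
Qed.

Lemma fvl_local (g : (A -> R) -> R) : fvl g ->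
  exists F : set A, finite_set F /\
    forall x y, (forall a, F a -> x a = y a) -> g x = g y.
Proof.
elim.
- move=> a; exists [set a]; split; first exact: finite_set1.
  by move=> x y h; rewrite /fdelta h.
- move=> f1 g1 _ [F1 [h1 e1]] _ [F2 [h2 e2]]; exists (F1 `|` F2); split.
    by rewrite finite_setU.
  move=> x y h; rewrite (e1 x y) ?(e2 x y) // => a ha; apply: h; by [left|right].
- move=> c f1 _ [F1 [h1 e1]]; exists F1; split => // x y h; by rewrite (e1 x y).
- move=> f1 g1 _ [F1 [h1 e1]] _ [F2 [h2 e2]]; exists (F1 `|` F2); split.
    by rewrite finite_setU.
  move=> x y h; rewrite (e1 x y) ?(e2 x y) // => a ha; apply: h; by [left|right].
Qed.

Lemma fvl0 (g : (A -> R) -> R) : fvl g -> g (fun _ => 0) = 0.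
Proof.
elim => //=.
- by move=> f1 g1 _ -> _ ->; rewrite addr0.
- by move=> c f1 _ ->; rewrite mulr0.
- by move=> f1 g1 _ -> _ ->; rewrite maxxx.
Qed.

Lemma approx (h : (A -> R) -> R) d : FBL h -> 0 < d ->
  exists F : set A, finite_set F /\
    forall x, in_cube x -> h x - d <= h (restr F x).
Proof.
move=> [_ hF] d0.
have d20 : 0 < d / 2 by rewrite divr_gt0.
have [g [gv gn]] := hF _ d20.
have [F [Ff Fe]] := fvl_local _ gv.
exists F; split => // x hx.
have b1 := eval_le_norm (fun xs => h xs - g xs) _ hx.
have b2 := eval_le_norm (fun xs => h xs - g xs) _ (restr_cube F _ hx).
have c1 := le_lt_trans b1 gn; have c2 := le_lt_trans b2 gn.
rewrite lte_fin in c1; rewrite lte_fin in c2.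
move/ltW: c1; move/ltW: c2; rewrite !ler_norml => /andP[c2 c2'] /andP[c1 c1'].
have e : g (restr F x) = g x.
  by apply: Fe => a ha; rewrite /restr asboolT.
rewrite e in c2 c2'.
lra.
Qed.

Lemma geo (e : R) m : \sum_(i < m) (e / 2 ^+ i.+1) = e - e / 2 ^+ m.
Proof.
elim: m => [|m IH]; first by rewrite big_ord0 expr0 divr1 subrr.
rewrite big_ord_recr /= IH !exprS.
have h2 : (2 : R) ^+ m != 0 by rewrite expf_neq0.
field.
by rewrite h2 /=; lra.
Qed.

End Aux.
Arguments restr {R A}.
Arguments restr_cube {R A}.
Arguments eval_le_norm {R A}.
Arguments approx {R A}.
Arguments fvl0 {R A}.
Arguments geo {R}.
Theorem mainTheorem5 (R : realType) (A : Type)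
  (xs : nat -> A -> R) (f : nat -> (A -> R) -> R) :
  infinite_set [set: A] ->
  (forall n, in_cube (xs n)) ->
  (forall n, FBL (f n)) ->
  (forall n (y : A -> R), in_cube y -> 0 <= f n y) ->
  (forall n, f n (xs n) = 1) ->
  (forall F : set A, finite_set F -> exists n, forall a, F a -> xs n a = 0) ->
  forall eps : R, 0 < eps ->
  exists nk : nat -> nat, {homo nk : i j / (i < j)%N >-> (i < j)%N} /\
    forall m : nat,
      ((m%:R - eps)%:E <= fbl_norm (fun y => (\sum_(k < m) f (nk k) y)%R))%E.
Proof.
move=> _ hcube hFBL hpos hone hvan eps eps0.
have hG : forall p : nat * nat, exists F : set A, finite_set F /\
    forall x, in_cube x -> f p.1 x - eps / 2 ^+ p.2.+1 <= f p.1 (restr F x).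
  move=> [n k]; apply: approx => //; by rewrite divr_gt0 // exprn_gt0.
have [G HG] := choice hG.
have hw : forall n, exists a, xs n a != 0.
  move=> n; apply/not_existsP => /= hall.
  have ex0 : xs n = (fun _ => 0).
    by apply: funext => a; have := hall a; case: eqP.
  have [_ hF] := hFBL n.
  have [g [gv gn]] := hF (1/2) ltac:(by rewrite divr_gt0).
  have b := le_lt_trans (eval_le_norm (fun y => f n y - g y) (fun _ => 0)
     (fun a => ltac:(by rewrite lerN10 ler01))) gn.
  rewrite lte_fin (fvl0 g gv) subr0 -ex0 hone normr1 in b.
  lra.
have [w Hw] := choice hw.
have hpk : forall F : set A, exists n, finite_set F -> forall a, F a -> xs n a = 0.
  move=> F; case: (pselect (finite_set F)) => hF.
    by have [n hn] := hvan F hF; exists n.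
  by exists 0%N.
have [pk Hpk] := choice hpk.
pose Snew n k := G (n, k) `|` [set w i | i in `I_n.+1].
pose Sacc := fix S (k : nat) : set A :=
  if k is k'.+1 then S k' `|` Snew (pk (S k')) k' else set0.
pose nk k := pk (Sacc k).
have finS : forall k, finite_set (Sacc k).
  elim => [|k IH] /=; first exact: finite_set0.
  rewrite !finite_setU; split => //; split; first by have [] := HG (pk (Sacc k), k).
  exact/finite_image/finite_II.
have Van : forall k a, Sacc k a -> xs (nk k) a = 0.
  by move=> k a; apply: Hpk.
have mono : forall j k, (j <= k)%N -> Sacc j `<=` Sacc k.
  move=> j; elim => [|k IH].
    by rewrite leqn0 => /eqP ->.
  rewrite leq_eqVlt => /orP [/eqP -> //|]; rewrite ltnS => /IH h a /h ha.
  by left.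
have incl : forall j k, (j < k)%N -> Snew (nk j) j `<=` Sacc k.
  move=> j k jk a ha; apply: (mono j.+1 k jk); by right.
have incr : forall j k, (j < k)%N -> (nk j < nk k)%N.
  move=> j k jk; rewrite ltnNge; apply/negP => hle.
  have : Sacc k (w (nk k)).
    apply: (incl j k jk); right; exists (nk k) => //=.
  move/Van => h0; have := Hw (nk k); by rewrite h0 eqxx.
exists nk; split; first by move=> i j; apply: incr.
move=> m.
pose y i := restr (G (nk i, i)) (xs (nk i)).
have ycube : forall i, in_cube (y i) by move=> i; apply: restr_cube.
have disj0 : forall i j a, (i < j)%N -> y i a = 0 \/ y j a = 0.
  move=> i j a ij; rewrite /y /restr.
  case: (asboolP (G (nk i, i) a)) => h; last by left.
  right; rewrite Van; first by case: ifP.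
  by apply: (incl i j ij); left.
have disj : forall i j a, i <> j -> y i a = 0 \/ y j a = 0.
  move=> i j a; case: (ltngtP i j) => [ij|ji|->] // _.
    exact: disj0.
  by have [] := disj0 j i a ji; [right|left].
have sumb : forall a, \sum_(i < m) `|y i a| <= 1.
  move=> a; case: (pselect (exists i : 'I_m, y i a != 0)) => [[i0 hi0]|hno].
    rewrite (bigD1 i0) //= big1 ?addr0.
      by rewrite ler_norml; apply: ycube.
    move=> j hj; have : (j : nat) <> i0.
      by move=> e; move: hj; rewrite (_ : j = i0) ?eqxx //; exact: val_inj.
    move/(disj _ _ a) => [->|h]; first by rewrite normr0.
    by move: hi0; rewrite h eqxx.
  rewrite big1 ?ler01 // => i _.
  case: (eqVneq (y i a) 0) => [->|h]; first by rewrite normr0.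
  by exfalso; apply: hno; exists i.
apply: (@le_trans _ _ (\sum_(i < m) `|\sum_(k < m) f (nk k) (y i)|)%:E).
  rewrite lee_fin.
  apply: (@le_trans _ _ (\sum_(i < m) (1 - eps / 2 ^+ i.+1))).
    rewrite sumrB geo sumr_const card_ord.
    have : 0 <= eps / 2 ^+ m by rewrite divr_ge0 // ?ltW // exprn_ge0.
    lra.
  apply: ler_sum => i _.
  apply: (le_trans _ (ler_norm _)).
  rewrite (bigD1 i) //=.
  apply: (@le_trans _ _ (f (nk i) (y i))).
    have [_ h] := HG (nk i, val i).
    by have := h _ (hcube (nk i)); rewrite /= hone.
  rewrite lerDl; apply: sumr_ge0 => k _; exact: hpos.
apply: ereal_sup_ubound.
exists m, (fun i : 'I_m => y i); split => //.
Qed.
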